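(* Let $\mathbb{H}\in\mathbb{C}^{t\times r}$ be a random matrix with $\mathbb{E}[\|\mathbb{H}\|_F^2]<\infty$ whose distribution is absolutely continuous with respect to Lebesgue measure on $\mathbb{C}^{t\times r}$, and let $\rho>0$. Then for every $R\in\mathbb{R}_+$ the infimum $$\inf_{Q\in\mathcal{U}_t}\Pr\big[\log\det(I_r+\mathbb{H}^HQ\mathbb{H})<R\big]$$ is attained, i.e., it is a minimum.
   Context: $\mathcal{U}_t=\{Q\in\mathbb{C}^{t\times t}:Q\succeq0,\ \operatorname{tr}Q\le\rho\}$; $\|A\|_F=\sqrt{\operatorname{tr}(AA^H)}$. *)

(* Defs.v *)
From HB Require Import structures.
From mathcomp Require Import all_boot all_order all_algebra.
From mathcomp Require Import all_classical all_reals all_analysis.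
From mathcomp Require Import complex.
Set Implicit Arguments. Unset Strict Implicit. Unset Printing Implicit Defensive.
Import Order.TTheory GRing.Theory Num.Theory.
Local Open Scope classical_set_scope.
Local Open Scope ring_scope.

Definition mxH (R : rcfType) m n (A : 'M[R[i]]_(m, n)) : 'M[R[i]]_(n, m) :=
  map_mx (@conjc R) A^T.

Definition psd (R : rcfType) n (Q : 'M[R[i]]_n) : Prop :=
  mxH Q = Q /\ forall v : 'cV[R[i]]_n, 0 <= (mxH v *m Q *m v) ord0 ord0.

Definition U_set (R : rcfType) t (rho : R) : set 'M[R[i]]_t :=
  [set Q | psd Q /\ \tr Q <= (rho%:C)%C].

(* Real coordinates of a complex t x r matrix: identifies C^{t x r} with
   R^{2tr} (the coordinate (i,j,false) is Re A_ij, (i,j,true) is Im A_ij). *)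
Definition mx_coords (R : rcfType) t r (A : 'M[R[i]]_(t, r))
  : 'I_t * 'I_r * bool -> R :=
  fun k => if k.2 then complex.Im (A k.1.1 k.1.2) else complex.Re (A k.1.1 k.1.2).

Definition lebesgue_null (R : realType) (I : finType) (A : set (I -> R)) : Prop :=
  forall eps : R, 0 < eps ->
    exists a b : nat -> I -> R,
      (forall n i, a n i <= b n i) /\
      A `<=` \bigcup_n [set x | forall i, a n i <= x i <= b n i] /\
      (\sum_(0 <= n <oo) ((\prod_i (b n i - a n i))%:E) <= eps%:E)%E.

Definition rmx (R : realType) (T : Type) t r (Hre Him : 'I_t -> 'I_r -> T -> R)
  (w : T) : 'M[R[i]]_(t, r) :=
  \matrix_(i, j) (Complex (Hre i j w) (Him i j w)).

Definition frob2 (R : realType) t r (A : 'M[R[i]]_(t, r)) : R :=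
  \sum_i \sum_j ((complex.Re (A i j)) ^+ 2 + (complex.Im (A i j)) ^+ 2).

(* log det (I_r + H^H Q H); the determinant is real and >= 1 for Q psd. *)
Definition logdet_chan (R : realType) t r (A : 'M[R[i]]_(t, r)) (Q : 'M[R[i]]_t) : R :=
  ln (complex.Re (\det (1%:M + mxH A *m Q *m A))).

Definition outage_event (R : realType) (T : Type) t r
  (Hre Him : 'I_t -> 'I_r -> T -> R) (Q : 'M[R[i]]_t) (Rate : R) : set T :=
  [set w | logdet_chan (rmx Hre Him w) Q < Rate].

(* Main.v *)
Require Import Defs.
From HB Require Import structures.
From mathcomp Require Import all_boot all_order all_algebra.
From mathcomp Require Import all_classical all_reals all_analysis.
From mathcomp Require Import complex.
From mathcomp Require Import measurable_realfun.
From mathcomp Require Import ring lra.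
Import Order.TTheory GRing.Theory Num.Theory.
Import numFieldNormedType.Exports.
Local Open Scope classical_set_scope.
Local Open Scope ring_scope.

Section Closure.
Variables (R : realType) (X : Type) (good : (X -> R) -> Prop).
Hypotheses (gcst : forall c, good (fun _ => c))
 (gadd : forall f g, good f -> good g -> good (fun x => f x + g x))
 (gmul : forall f g, good f -> good g -> good (fun x => f x * g x))
 (gopp : forall f, good f -> good (fun x => - f x)).

Definition cgood (f : X -> R[i]) :=
  good (fun x => complex.Re (f x)) /\ good (fun x => complex.Im (f x)).

Lemma cg_cst c : cgood (fun _ => c).
Proof. by split; apply: gcst. Qed.

Lemma cg_add f g : cgood f -> cgood g -> cgood (fun x => f x + g x).
Proof.
move=> [f1 f2] [g1 g2]; split.
- have -> : (fun x => complex.Re (f x + g x)) =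
     (fun x => complex.Re (f x) + complex.Re (g x)).
    by apply: funext => x; case: (f x) => ??; case: (g x).
  exact: gadd.
- have -> : (fun x => complex.Im (f x + g x)) =
     (fun x => complex.Im (f x) + complex.Im (g x)).
    by apply: funext => x; case: (f x) => ??; case: (g x).
  exact: gadd.
Qed.

Lemma cg_mul f g : cgood f -> cgood g -> cgood (fun x => f x * g x).
Proof.
move=> [f1 f2] [g1 g2]; split.
- have -> : (fun x => complex.Re (f x * g x)) =
     (fun x => complex.Re (f x) * complex.Re (g x) +
               - (complex.Im (f x) * complex.Im (g x))).
    by apply: funext => x; case: (f x) => ??; case: (g x).
  by apply: gadd; [apply: gmul|apply: gopp; apply: gmul].
- have -> : (fun x => complex.Im (f x * g x)) =
     (fun x => complex.Re (f x) * complex.Im (g x) +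
               complex.Im (f x) * complex.Re (g x)).
    by apply: funext => x; case: (f x) => ??; case: (g x).
  by apply: gadd; apply: gmul.
Qed.

Lemma cg_opp f : cgood f -> cgood (fun x => - f x).
Proof.
move=> [f1 f2]; split.
- have -> : (fun x => complex.Re (- f x)) = (fun x => - complex.Re (f x)).
    by apply: funext => x; case: (f x).
  exact: gopp.
- have -> : (fun x => complex.Im (- f x)) = (fun x => - complex.Im (f x)).
    by apply: funext => x; case: (f x).
  exact: gopp.
Qed.

Lemma cg_conj f : cgood f -> cgood (fun x => (f x)^*%C).
Proof.
move=> [f1 f2]; split.
- have -> : (fun x => complex.Re ((f x)^*%C)) = (fun x => complex.Re (f x)).
    by apply: funext => x; case: (f x).
  exact: f1.
- have -> : (fun x => complex.Im ((f x)^*%C)) = (fun x => - complex.Im (f x)).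
    by apply: funext => x; case: (f x).
  exact: gopp.
Qed.

Lemma cg_sum (I : Type) (s : seq I) (P : pred I) (F : I -> X -> R[i]) :
  (forall i, cgood (F i)) -> cgood (fun x => \sum_(i <- s | P i) F i x).
Proof.
move=> HF; elim: s => [|a s IH].
  have -> : (fun x => \sum_(i <- [::] | P i) F i x) = (fun _ => 0).
    by apply: funext => x; rewrite big_nil.
  exact: cg_cst.
have -> : (fun x => \sum_(i <- a :: s | P i) F i x) =
  (fun x => (if P a then F a x else 0) + \sum_(i <- s | P i) F i x).
  by apply: funext => x; rewrite big_cons; case: (P a); rewrite ?add0r.
apply: cg_add => //; case: (P a) => //; exact: cg_cst.
Qed.

Lemma cg_prod (I : Type) (s : seq I) (P : pred I) (F : I -> X -> R[i]) :
  (forall i, cgood (F i)) -> cgood (fun x => \prod_(i <- s | P i) F i x).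
Proof.
move=> HF; elim: s => [|a s IH].
  have -> : (fun x => \prod_(i <- [::] | P i) F i x) = (fun _ => 1).
    by apply: funext => x; rewrite big_nil.
  exact: cg_cst.
have -> : (fun x => \prod_(i <- a :: s | P i) F i x) =
  (fun x => (if P a then F a x else 1) * \prod_(i <- s | P i) F i x).
  by apply: funext => x; rewrite big_cons; case: (P a); rewrite ?mul1r.
apply: cg_mul => //; case: (P a) => //; exact: cg_cst.
Qed.

Definition cgmx (m n : nat) (M : X -> 'M[R[i]]_(m, n)) := forall i j, cgood (fun x => M x i j).
Arguments cgmx {m n}.

Lemma cgmx_cst m n (A : 'M[R[i]]_(m, n)) : cgmx (fun _ => A).
Proof. by move=> i j; exact: cg_cst. Qed.

Lemma cgmx_add m n (M N : X -> 'M[R[i]]_(m, n)) :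
  cgmx M -> cgmx N -> cgmx (fun x => M x + N x).
Proof.
move=> HM HN i j.
have -> : (fun x => (M x + N x) i j) = (fun x => M x i j + N x i j).
  by apply: funext => x; rewrite mxE.
exact: cg_add.
Qed.

Lemma cgmx_opp m n (M : X -> 'M[R[i]]_(m, n)) :
  cgmx M -> cgmx (fun x => - M x).
Proof.
move=> HM i j.
have -> : (fun x => (- M x) i j) = (fun x => - M x i j).
  by apply: funext => x; rewrite mxE.
exact: cg_opp.
Qed.

Lemma cgmx_mul m n p (M : X -> 'M[R[i]]_(m, n)) (N : X -> 'M[R[i]]_(n, p)) :
  cgmx M -> cgmx N -> cgmx (fun x => M x *m N x).
Proof.
move=> HM HN i j.
have -> : (fun x => (M x *m N x) i j) = (fun x => \sum_k M x i k * N x k j).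
  by apply: funext => x; rewrite mxE.
by apply: cg_sum => k; apply: cg_mul.
Qed.

Lemma cgmx_H m n (M : X -> 'M[R[i]]_(m, n)) : cgmx M -> cgmx (fun x => mxH (M x)).
Proof.
move=> HM i j.
have -> : (fun x => mxH (M x) i j) = (fun x => (M x j i)^*%C).
  by apply: funext => x; rewrite /mxH !mxE.
exact: cg_conj.
Qed.

Lemma cg_det n (M : X -> 'M[R[i]]_n) : cgmx M -> cgood (fun x => \det (M x)).
Proof.
move=> HM.
rewrite /determinant.
apply: cg_sum => s; apply: cg_mul; first exact: cg_cst.
by apply: cg_prod => i; apply: HM.
Qed.

Lemma good_chan t r (A : X -> 'M[R[i]]_(t, r)) (Q : X -> 'M[R[i]]_t) :
  cgmx A -> cgmx Q ->
  good (fun x => complex.Re (\det (1%:M + mxH (A x) *m Q x *m A x))).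
Proof.
move=> HA HQ.
suff : cgood (fun x => \det (1%:M + mxH (A x) *m Q x *m A x)) by case.
apply: cg_det; apply: cgmx_add; first exact: cgmx_cst.
apply: cgmx_mul => //; apply: cgmx_mul => //; exact: cgmx_H.
Qed.

End Closure.
Lemma good_cont_cst (R : realType) (X : topologicalType) (c : R) :
  continuous (fun _ : X => c).
Proof. exact: cst_continuous. Qed.

Lemma good_cont_add (R : realType) (X : topologicalType) (f g : X -> R) :
  continuous f -> continuous g -> continuous (fun x => f x + g x).
Proof. by move=> hf hg x; exact: (@continuousD _ _ _ f g x (hf x) (hg x)). Qed.

Lemma good_cont_mul (R : realType) (X : topologicalType) (f g : X -> R) :
  continuous f -> continuous g -> continuous (fun x => f x * g x).
Proof. by move=> hf hg x; exact: continuousM (hf x) (hg x). Qed.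

Lemma good_cont_opp (R : realType) (X : topologicalType) (f : X -> R) :
  continuous f -> continuous (fun x => - f x).
Proof. by move=> hf x; exact: (@continuousN _ _ _ f x (hf x)). Qed.

Lemma good_meas_cst (R : realType) d (T : measurableType d) (c : R) :
  measurable_fun setT (fun _ : T => c).
Proof. exact: measurable_cst. Qed.

Lemma good_meas_add (R : realType) d (T : measurableType d) (f g : T -> R) :
  measurable_fun setT f -> measurable_fun setT g ->
  measurable_fun setT (fun x => f x + g x).
Proof. exact: measurable_funD. Qed.

Lemma good_meas_mul (R : realType) d (T : measurableType d) (f g : T -> R) :
  measurable_fun setT f -> measurable_fun setT g ->
  measurable_fun setT (fun x => f x * g x).
Proof. exact: measurable_funM. Qed.

Lemma good_meas_opp (R : realType) d (T : measurableType d) (f : T -> R) :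
  measurable_fun setT f -> measurable_fun setT (fun x => - f x).
Proof. exact: measurable_funN. Qed.

Lemma open_ln_lt (R : realType) (Rate : R) : 0 <= Rate ->
  open [set x : R | ln x < Rate].
Proof.
move=> hR; rewrite openE => x /= hx.
have [x0|x0] := leP x 0.
  have x1 : x < 1 by apply: le_lt_trans x0 _.
  rewrite /interior; near=> y.
  have y1 : y < 1 by near: y; exact: lt_nbhsl.
  by apply: le_lt_trans (ln_le0 (ltW y1)) _; rewrite -(ln0 x0).
have hc := continuous_ln x0.
exact: (hc _ (lt_nbhsl hx)).
Unshelve. all: by end_near. Qed.

Section Main.
Variables (R : realType) (t : nat).
Local Notation N := #|{: 'I_t * 'I_t * bool}|.
Local Notation X := 'rV[R]_N.

Definition matc (c : X) : 'M[R[i]]_t :=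
  \matrix_(i, j) Complex (c ord0 (enum_rank (i, j, false)))
                         (c ord0 (enum_rank (i, j, true))).

Definition vecm (Q : 'M[R[i]]_t) : X := \row_k mx_coords Q (enum_val k).

Lemma vecmK Q : matc (vecm Q) = Q.
Proof.
apply/matrixP => i j; rewrite !mxE !enum_rankK /mx_coords /=.
by case: (Q i j).
Qed.

Lemma cgmx_matc : @cgmx R X (fun f : X -> R => continuous f) _ _ matc.
Proof.
move=> i j; split => /=.
- have -> : (fun x : X => complex.Re (matc x i j)) =
     (fun x : X => x ord0 (enum_rank (i, j, false))).
    by apply: funext => x; rewrite mxE.
  exact: coord_continuous.
- have -> : (fun x : X => complex.Im (matc x i j)) =
     (fun x : X => x ord0 (enum_rank (i, j, true))).
    by apply: funext => x; rewrite mxE.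
  exact: coord_continuous.
Qed.

Lemma cont_chan r (A : 'M[R[i]]_(t, r)) :
  continuous (fun c : X => complex.Re (\det (1%:M + mxH A *m matc c *m A))).
Proof.
have H := (@good_chan R X (fun f : X -> R => continuous f)
          (@good_cont_cst R _) (@good_cont_add R _) (@good_cont_mul R _)
          (@good_cont_opp R _) t r (fun _ => A) matc).
exact: H (@cgmx_cst R X _ (@good_cont_cst R _) t r A) cgmx_matc.
Qed.

End Main.
Arguments matc {R t}. Arguments vecm {R t}.

Lemma meas_chan (R : realType) d (T : measurableType d) t r
  (Fre Fim : 'I_t -> 'I_r -> T -> R)
  (hre : forall i j, measurable_fun setT (Fre i j))
  (him : forall i j, measurable_fun setT (Fim i j)) (Q : 'M[R[i]]_t) :
  measurable_fun setT
    (fun w => complex.Re (\det (1%:M + mxH (rmx Fre Fim w) *m Q *m rmx Fre Fim w))).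
Proof.
have H := (@good_chan R T (fun f : T -> R => measurable_fun setT f)
          (@good_meas_cst R _ _) (@good_meas_add R _ _) (@good_meas_mul R _ _)
          (@good_meas_opp R _ _) t r (rmx Fre Fim) (fun _ => Q)).
apply: H; last exact: (@cgmx_cst R T _ (@good_meas_cst R _ _) t t Q).
move=> i j; split => /=.
- have -> : (fun w => complex.Re (rmx Fre Fim w i j)) = Fre i j.
    by apply: funext => w; rewrite mxE.
  exact: hre.
- have -> : (fun w => complex.Im (rmx Fre Fim w i j)) = Fim i j.
    by apply: funext => w; rewrite mxE.
  exact: him.
Qed.


Section Bounds.
Variables (R : realType) (t : nat).

Definition ev (i : 'I_t) : 'cV[R[i]]_t := delta_mx i 0.

Lemma mxH_add (m n : nat) (A B : 'M[R[i]]_(m, n)) : mxH (A + B) = mxH A + mxH B.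
Proof. by apply/matrixP => a b; rewrite /mxH !mxE raddfD. Qed.

Lemma mxH_scale (m n : nat) (z : R[i]) (A : 'M[R[i]]_(m, n)) :
  mxH (z *: A) = z^*%C *: mxH A.
Proof. by apply/matrixP => a b; rewrite /mxH !mxE rmorphM. Qed.

Lemma mxH_ev i : mxH (ev i) = delta_mx 0 i.
Proof.
by apply/matrixP => a b; rewrite /mxH /ev !mxE conjc_nat andbC.
Qed.

Lemma qf_entry (Q : 'M[R[i]]_t) i j : ((delta_mx 0 i : 'rV[R[i]]_t) *m Q *m ev j) ord0 ord0 = Q i j.
Proof. by rewrite /ev -rowE -colE !mxE. Qed.

Lemma qf_mx (Q : 'M[R[i]]_t) i j :
  (delta_mx 0 i : 'rV[R[i]]_t) *m Q *m ev j = const_mx (Q i j).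
Proof. by apply/matrixP => a b; rewrite !ord1 qf_entry mxE. Qed.

Lemma qf_two (Q : 'M[R[i]]_t) i j z :
  (mxH (ev i + z *: ev j) *m Q *m (ev i + z *: ev j)) ord0 ord0 =
  Q i i + z * Q i j + z^*%C * Q j i + z^*%C * z * Q j j.
Proof.
rewrite mxH_add mxH_scale !mxH_ev.
rewrite !mulmxDl !mulmxDr -!scalemxAl -!scalemxAr !qf_mx !mxE.
ring.
Qed.

End Bounds.
Arguments ev {R t} i.

Section Bounds2.
Variables (R : realType) (t : nat).

Lemma ge0c (x : R[i]) : 0 <= x -> complex.Im x = 0 /\ 0 <= complex.Re x.
Proof. by case: x => a b; rewrite lecE /= => /andP[/eqP -> ->]. Qed.

Lemma ReD : {morph (@complex.Re R) : x y / x + y}.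
Proof. by move=> [a b] [c d]. Qed.

Lemma qf_one (Q : 'M[R[i]]_t) i :
  (mxH (ev i) *m Q *m ev i) ord0 ord0 = Q i i.
Proof. by rewrite mxH_ev qf_entry. Qed.

Lemma U_bound (rho : R) (Q : 'M[R[i]]_t) : U_set rho Q ->
  forall i j, `|complex.Re (Q i j)| <= rho /\ `|complex.Im (Q i j)| <= rho.
Proof.
case=> [[hH hpos] htr] i j.
have hconj a b : Q b a = (Q a b)^*%C.
  by have := congr1 (fun M : 'M[R[i]]_t => M b a) hH; rewrite /mxH !mxE => <-.
have diag k : complex.Im (Q k k) = 0 /\ 0 <= complex.Re (Q k k).
  by apply: ge0c; rewrite -qf_one; apply: hpos.
have htr' : \sum_k complex.Re (Q k k) <= rho.
  move: htr; rewrite lecE => /andP[_].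
  by rewrite /mxtrace (big_morph _ ReD (erefl (complex.Re (0 : R[i])))).
have hr0 : 0 <= rho.
  by apply: le_trans htr'; apply: sumr_ge0 => k _; exact: (diag k).2.
have [eij|nij] := eqVneq i j.
  subst j; have [d1 d2] := diag i; rewrite d1 normr0; split => //.
  rewrite ger0_norm //; apply: le_trans htr'.
  rewrite (bigD1 i) //= lerDl; apply: sumr_ge0 => k _; exact: (diag k).2.
have hpq : complex.Re (Q i i) + complex.Re (Q j j) <= rho.
  apply: le_trans htr'; rewrite (bigD1 i) //= (bigD1 j) 1?eq_sym //= addrA lerDl.
  apply: sumr_ge0 => k _; exact: (diag k).2.
have E z : 0 <= Q i i + z * Q i j + z^*%C * (Q i j)^*%C + z^*%C * z * Q j j.
  by rewrite -hconj -qf_two; apply: hpos.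
have E1 := E 1; have E2 := E (-1); have E3 := E 'i%C; have E4 := E (- 'i%C).
move: (diag i) (diag j) hpq E1 E2 E3 E4.
case: (Q i i) => p p'; case: (Q j j) => q q'; case: (Q i j) => a b /=.
move=> [-> hp] [-> hq] hpq.
rewrite !lecE /= => /andP[_ h1] /andP[_ h2] /andP[_ h3] /andP[_ h4].
split; rewrite ler_norml; apply/andP; split; lra.
Qed.

End Bounds2.

Lemma closed_forall (T : topologicalType) (J : Type) (P : J -> T -> Prop) :
  (forall j, closed [set x | P j x]) -> closed [set x | forall j, P j x].
Proof.
move=> h.
have -> : [set x | forall j, P j x] = \bigcap_(j in [set: J]) [set x | P j x].
  apply/seteqP; split => x /= H j.
    by move=> _; apply: H.
  by apply: H.
by apply: closed_bigI => j _; exact: h.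
Qed.

Section Main2.
Variables (R : realType) (t : nat) (rho : R).
Local Notation N := #|{: 'I_t * 'I_t * bool}|.
Local Notation X := 'rV[R]_N.
Local Notation gC := (fun f : X -> R => continuous f).

Lemma closed_re_eq0 (g : X -> R) : continuous g -> closed [set x | g x = 0].
Proof. by move=> hg; exact: ((continuous_closedP g).1 hg _ (@closed_eq R 0)). Qed.

Lemma closed_re_ge0 (g : X -> R) : continuous g -> closed [set x | 0 <= g x].
Proof. by move=> hg; exact: ((continuous_closedP g).1 hg _ (@closed_ge R 0)). Qed.

Lemma closed_c_eq0 (f : X -> R[i]) : @cgood R X gC f -> closed [set x | f x = 0].
Proof.
case=> h1 h2.
have -> : [set x | f x = 0] =
    [set x | complex.Re (f x) = 0] `&` [set x | complex.Im (f x) = 0].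
  apply/seteqP; split => x /=.
    by move=> ->.
  by case: (f x) => a b /= [-> ->].
by apply: closedI; [exact: closed_re_eq0 | exact: closed_re_eq0].
Qed.

Lemma closed_c_ge0 (f : X -> R[i]) : @cgood R X gC f -> closed [set x | 0 <= f x].
Proof.
case=> h1 h2.
have -> : [set x | 0 <= f x] =
    [set x | complex.Im (f x) = 0] `&` [set x | 0 <= complex.Re (f x)].
  apply/seteqP; split => x /=.
    exact: ge0c.
  by case: (f x) => a b /= [-> h]; rewrite lecE /= eqxx h.
by apply: closedI; [exact: closed_re_eq0 | exact: closed_re_ge0].
Qed.

Definition Uc : set X := [set c | U_set rho (matc c)].

Lemma closed_Uc : closed Uc.
Proof.
have -> : Uc =
   [set c | forall ij : 'I_t * 'I_t, (mxH (matc c) - matc c) ij.1 ij.2 = 0]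
   `&` ([set c | forall v : 'cV[R[i]]_t, 0 <= (mxH v *m matc c *m v) ord0 ord0]
   `&` [set c | 0 <= (rho%:C)%C - \tr (matc c)]).
  apply/seteqP; split => c /=.
    case=> [[hH hp] ht]; split; first by move=> ij; rewrite hH subrr mxE.
    by split => //; rewrite subr_ge0.
  case=> hH [hp ht]; split; last by rewrite -subr_ge0.
  split => //; apply: subr0_eq; apply/matrixP => i j.
  by move: (hH (i, j)); rewrite /= !mxE.
have Hc := @good_cont_cst R X.
have Ha := @good_cont_add R X.
have Hm := @good_cont_mul R X.
have Ho := @good_cont_opp R X.
apply: closedI; [|apply: closedI].
- apply: closed_forall => ij; apply: closed_c_eq0.
  apply: (@cgmx_add R X gC Ha); last first.
    by apply: (@cgmx_opp R X gC Ho); exact: cgmx_matc.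
  by apply: (@cgmx_H R X gC Ho); exact: cgmx_matc.
- apply: closed_forall => v; apply: closed_c_ge0.
  apply: (@cgmx_mul R X gC Hc Ha Hm Ho); last exact: (@cgmx_cst R X gC Hc).
  apply: (@cgmx_mul R X gC Hc Ha Hm Ho); first exact: (@cgmx_cst R X gC Hc).
  exact: cgmx_matc.
- apply: closed_c_ge0; rewrite /mxtrace.
  apply: (@cg_add R X gC Ha); first exact: (@cg_cst R X gC Hc).
  apply: (@cg_opp R X gC Ho); apply: (@cg_sum R X gC Hc Ha) => i.
  exact: cgmx_matc.
Qed.

Lemma compact_Uc : compact Uc.
Proof.
have Mnco : compact [set v : X | forall i, v ord0 i \in `[(- rho), rho]].
  apply: (@rV_compact _ _ (fun=> `[(- rho), rho]%classic)).
  by move=> _; apply: segment_compact.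
apply: subclosed_compact closed_Uc Mnco _.
move=> c hc k.
have [[[i j] b] ->] : exists x, k = enum_rank x by exists (enum_val k); rewrite enum_valK.
have [h1 h2] := @U_bound R t rho (matc c) hc i j.
rewrite !mxE /= in h1 h2.
by rewrite /= in_itv /= -ler_norml; case: b.
Qed.

Lemma matc0 : matc (0 : X) = 0 :> 'M[R[i]]_t.
Proof. by apply/matrixP => i j; rewrite !mxE. Qed.

Lemma Uc0 : 0 <= rho -> Uc 0.
Proof.
move=> hr; rewrite /Uc /= matc0.
split; last by rewrite mxtrace0 lecE /= eqxx hr.
split; first by apply/matrixP => i j; rewrite /mxH !mxE conjc0.
by move=> v; rewrite mulmx0 mul0mx mxE.
Qed.

End Main2.

Theorem proposition1 (R : realType) (d : measure_display) (T : measurableType d)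
  (P : probability T R) (t r : nat)
  (Hre Him : 'I_t -> 'I_r -> {RV P >-> R})
  (* E[ ||H||_F^2 ] < oo *)
  (hmom : (\int[P]_w (frob2 (rmx (fun i j => Hre i j) (fun i j => Him i j) w))%:E
             < +oo)%E)
  (* the law of H is absolutely continuous w.r.t. Lebesgue measure on C^{t x r} *)
  (hac : forall A : set ('I_t * 'I_r * bool -> R), lebesgue_null A ->
     forall E : set T, measurable E ->
       E `<=` [set w | A (mx_coords (rmx (fun i j => Hre i j) (fun i j => Him i j) w))] ->
       P E = 0%E)
  (rho : R) (hrho : 0 < rho) (Rate : R) (hRate : 0 <= Rate) :
  exists2 Q0 : 'M[R[i]]_t, U_set rho Q0 &
    forall Q : 'M[R[i]]_t, U_set rho Q ->
      (P (outage_event (fun i j => Hre i j) (fun i j => Him i j) Q0 Rate)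
        <= P (outage_event (fun i j => Hre i j) (fun i j => Him i j) Q Rate))%E.
Proof.
pose X := 'rV[R]_#|{: 'I_t * 'I_t * bool}|.
pose Ev (c : X) := outage_event (fun i j => Hre i j) (fun i j => Him i j) (matc c) Rate.
pose g (w : T) (c : X) := complex.Re (\det (1%:M +
   mxH (rmx (fun i j => Hre i j) (fun i j => Him i j) w) *m matc c *m
   rmx (fun i j => Hre i j) (fun i j => Him i j) w)).
have EvE c : Ev c = [set w | ln (g w c) < Rate] by [].
have mE c : measurable (Ev c).
  have hm := @meas_chan R d T t r (fun i j => Hre i j) (fun i j => Him i j)
    (fun i j => @measurable_funP _ _ _ _ setT (Hre i j))
    (fun i j => @measurable_funP _ _ _ _ setT (Him i j)) (matc c).
  have := hm measurableT _ (open_measurable (@open_ln_lt R Rate hRate)).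
  by rewrite setTI.
pose psi c := fine (P (Ev c)).
have hPE c : P (Ev c) = (psi c)%:E.
  by rewrite /psi fineK // (fin_num_measure P _ (mE c)).
have psi0 c : 0 <= psi c by apply: fine_ge0; exact: measure_ge0.
pose U := @Uc R t rho.
pose S := [set psi c | c in U].
have hS : has_inf S.
  split; first by exists (psi 0); exists 0 => //; apply: (@Uc0 R t rho); exact: ltW.
  by exists 0 => _ [c _ <-].
pose m := inf S.
have hseq n : exists c, U c /\ psi c < m + n.+1%:R^-1.
  have he : 0 < n.+1%:R^-1 :> R by rewrite invr_gt0.
  have [_ [c hc <-] hlt] := inf_adherent he hS.
  by exists c.
have [cs hcs] := choice hseq.
have Fcs : (cs @ \oo) U by exists 0%N => // n _; exact: (hcs n).1.
have [cstar [Ucs clus]] := @compact_Uc R t rho (cs @ \oo) _ Fcs.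
have key : psi cstar <= m.
  rewrite leNgt; apply/negP => hlt.
  pose del := (psi cstar - m) / 2.
  have hdel : 0 < del by rewrite divr_gt0 // subr_gt0.
  pose c0 := m + del.
  have hc0 : c0 < psi cstar by rewrite /c0 /del; lra.
  have lsc : exists2 e : R, 0 < e & forall c, U c -> ball cstar e c -> c0 < psi c.
    apply: contrapT => hno.
    have hk k : exists c, U c /\ ball cstar k.+1%:R^-1 c /\ psi c <= c0.
      apply: contrapT => hk; apply: hno; exists k.+1%:R^-1.
        by rewrite invr_gt0.
      move=> c hc hb; rewrite ltNge; apply/negP => hle; apply: hk.
      by exists c.
    have [ds hds] := choice hk.
    pose A n := \bigcap_(k in [set k | (n <= k)%N]) Ev (ds k).
    have mA n : measurable (A n).
      by apply: bigcap_measurable; [exists n => /=|move=> k _; exact: mE].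
    have mU : measurable (\bigcup_n A n) by apply: bigcupT_measurable.
    have ndA : nondecreasing_seq A.
      move=> n1 n2 /= hn; apply/subsetPset => w hw k /= hkk; apply: hw => /=; exact: leq_trans hn hkk.
    have hcv := @nondecreasing_cvg_mu _ _ _ P A mA mU ndA.
    have hU : (P (\bigcup_n A n) <= c0%:E)%E.
      rewrite -(cvg_lim _ hcv) //; apply: lime_le; first by apply/cvg_ex; eexists; exact: hcv.
      apply: nearW => n /=.
      apply: (@le_trans _ _ (P (Ev (ds n)))).
        by apply: le_measure; rewrite ?inE //; move=> w hw; apply: hw => /=.
      by rewrite hPE lee_fin; case: (hds n) => _ [].
    have hsub : Ev cstar `<=` \bigcup_n A n.
      move=> w hw.
      have ho := (continuousP _).1 (@cont_chan R t r (rmx (fun i j => Hre i j) (fun i j => Him i j) w))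
         _ (@open_ln_lt R Rate hRate).
      have hn := @open_nbhs_nbhs _ cstar _ (conj ho hw).
      have [e he hball] := (nbhs_ballP cstar _).1 hn.
      have [N _ hN] := near_infty_natSinv_lt (PosNum he).
      exists N; first by [].
      move=> k hkN.
      have hb : ball cstar e (ds k).
        have hNk : k.+1%:R^-1 <= e by exact: ltW (hN k hkN).
        apply: (le_ball hNk).
        by case: (hds k) => _ [].
      exact: (hball (ds k) hb).
    have hPc : (P (Ev cstar) <= c0%:E)%E.
      apply: le_trans hU.
      apply: le_measure; [rewrite inE; exact: mE | rewrite inE; exact: mU | exact: hsub].
    move: hPc; rewrite hPE lee_fin => hle.
    by move: (lt_le_trans hc0 hle); rewrite ltxx.
  have [e he hlsc] := lsc.
  have FA : (cs @ \oo) [set c | U c /\ psi c < c0].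
    have [N _ hN] := near_infty_natSinv_lt (PosNum hdel).
    exists N; first by [].
    move=> n hn; split; first exact: (hcs n).1.
    apply: lt_trans (hcs n).2 _; rewrite /c0 ltrD2l; exact: hN n hn.
  have [c [[hc1 hc2] hc3]] := clus _ _ FA (nbhsx_ballx cstar e he).
  by move: (hlsc c hc1 hc3); rewrite ltNge (ltW hc2).
exists (matc cstar); first exact: Ucs.
move=> Q hQ.
have hQc : U (vecm Q).
  by rewrite /U /Uc; rewrite /mkset vecmK.
have e1 : outage_event (fun i j => Hre i j) (fun i j => Him i j) Q Rate = Ev (vecm Q).
  by rewrite /Ev vecmK.
have e0 : outage_event (fun i j => Hre i j) (fun i j => Him i j) (matc cstar) Rate
   = Ev cstar := erefl.
rewrite e1 e0.
move: (vecm Q) hQc => c' hc'.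
have H : ((psi cstar)%:E <= (psi c')%:E)%E.
  rewrite lee_fin; apply: (le_trans key).
  apply: (ge_inf hS.2).
  exists c'; [exact: hc' | reflexivity].
rewrite [X in (X <= _)%E](hPE cstar) [X in (_ <= X)%E](hPE c').
exact: H.
Qed.
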